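(* Let $G$ be a finitely generated group. If the finite index membership problem $MP_{f.i.}(G)$ is decidable, then $GCP_{Rec}(G)$ is decidable: there is an algorithm which, given a recognizable subset $K\subseteq G$ and $g\in G$, decides whether some conjugate of $g$ in $G$ lies in $K$.
   Context: $MP_{f.i.}(G)$ is the problem of deciding, given $g\in G$ and a finite index subgroup $H\le G$, whether $g\in H$. A subset $K$ of $G$ is recognizable if its full preimage in the free monoid $\tilde A^*$ on $A\cup A^{-1}$ (for a finite generating set $A$) is a rational (regular) language; equivalently $K$ is a finite union of cosets $Hb_1\cup\cdots\cup Hb_m$ of a finite index subgroup $H\le G$, and recognizable subsets are given in this form. *)

(* Defs.v *)
(* Algorithms are modelled by an explicit Turing-complete model of
   computation (mu-recursive functions on nat with Cantor pairing), and inputs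
   (words, lists of words) are encoded as natural numbers by an explicit
   injective coding.  A Rocq function would NOT do: with the whitelisted
   classical axioms every predicate has a Rocq "decider". *)
From Stdlib Require Import Arith List.
Import ListNotations.

Definition cpair (a b : nat) : nat := (a + b) * (a + b + 1) / 2 + b.

Inductive prog : Type :=
  | PZero : prog
  | PSucc : prog
  | PId : prog
  | PFst : prog
  | PSnd : prog
  | PComp : prog -> prog -> prog
  | PPair : prog -> prog -> prog
  | PRec : prog -> prog -> prog
  | PMin : prog -> prog.

Inductive peval : prog -> nat -> nat -> Prop :=
  | ev_zero x : peval PZero x 0
  | ev_succ x : peval PSucc x (S x)
  | ev_id x : peval PId x x
  | ev_fst a b : peval PFst (cpair a b) a
  | ev_snd a b : peval PSnd (cpair a b) b
  | ev_comp f g x y z : peval g x y -> peval f y z -> peval (PComp f g) x z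
  | ev_pair f g x a b : peval f x a -> peval g x b -> peval (PPair f g) x (cpair a b)
  | ev_rec f g x k y : receval f g x k y -> peval (PRec f g) (cpair x k) y
  | ev_min f x n : peval f (cpair x n) 0 ->
      (forall m, m < n -> exists k, peval f (cpair x m) (S k)) ->
      peval (PMin f) x n
with receval : prog -> prog -> nat -> nat -> nat -> Prop :=
  | rec_0 f g x y : peval f x y -> receval f g x 0 y
  | rec_S f g x k y z : receval f g x k y -> peval g (cpair x (cpair k y)) z ->
      receval f g x (S k) z.

Definition decides (p : prog) (Q : Prop) (x : nat) : Prop :=
  (Q -> peval p x 1) /\ (~ Q -> peval p x 0).

Fixpoint enc_list (l : list nat) : nat :=
  match l with
  | [] => 0
  | a :: l' => S (cpair a (enc_list l'))
  end.

Definition enc_words (ws : list (list nat)) : nat := enc_list (map enc_list ws).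

Record Group : Type := {
  gcar :> Type;
  gmul : gcar -> gcar -> gcar;
  gone : gcar;
  ginv : gcar -> gcar;
  gmulA : forall x y z, gmul x (gmul y z) = gmul (gmul x y) z;
  gmul1 : forall x, gmul gone x = x;
  gmulV : forall x, gmul (ginv x) x = gone }.

Arguments gmul {g} _ _.
Arguments gone {g}.
Arguments ginv {g} _.

(* Words over A ∪ A^{-1}, A = {a_0,...,a_{n-1}}: letter l stands for
   a_(l/2) if l is even and a_(l/2)^{-1} if l is odd. *)
Definition word_ok (n : nat) (w : list nat) : Prop := Forall (fun l => l / 2 < n) w.

Definition eval_letter {G : Group} (gens : nat -> G) (l : nat) : G :=
  if Nat.even l then gens (l / 2) else ginv (gens (l / 2)).

Definition eval_word {G : Group} (gens : nat -> G) (w : list nat) : G :=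
  fold_right (fun l acc => gmul (eval_letter gens l) acc) gone w.

Inductive in_gen {G : Group} (S : list G) : G -> Prop :=
  | ig_one : in_gen S gone
  | ig_mem s : In s S -> in_gen S s
  | ig_mul x y : in_gen S x -> in_gen S y -> in_gen S (gmul x y)
  | ig_inv x : in_gen S x -> in_gen S (ginv x).

Definition fin_index {G : Group} (S : list G) : Prop :=
  exists ts : list G, forall x : G, exists t, In t ts /\ in_gen S (gmul x (ginv t)).

Definition generates {G : Group} (n : nat) (gens : nat -> G) : Prop :=
  forall x : G, exists w, word_ok n w /\ eval_word gens w = x.

Definition MPfi_decidable {G : Group} (n : nat) (gens : nat -> G) : Prop :=
  exists p : prog, forall (w : list nat) (hs : list (list nat)),
    word_ok n w -> Forall (word_ok n) hs ->
    fin_index (map (eval_word gens) hs) ->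
    decides p (in_gen (map (eval_word gens) hs) (eval_word gens w))
      (cpair (enc_list w) (enc_words hs)).

(* GCP_Rec(G): input a word w (for g) and a recognizable K = H b_1 ∪ ... ∪ H b_m,
   given by words hs generating the finite index subgroup H and words bs for
   the b_i; decide whether some conjugate x^{-1} g x lies in K. *)
Definition GCPRec_decidable {G : Group} (n : nat) (gens : nat -> G) : Prop :=
  exists p : prog, forall (w : list nat) (hs bs : list (list nat)),
    word_ok n w -> Forall (word_ok n) hs -> Forall (word_ok n) bs ->
    fin_index (map (eval_word gens) hs) ->
    decides p
      (exists x : G, exists b, In b bs /\
         in_gen (map (eval_word gens) hs)
           (gmul (gmul (gmul (ginv x) (eval_word gens w)) x) (ginv (eval_word gens b))))
      (cpair (enc_list w) (cpair (enc_words hs) (enc_words bs))).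

(* Submission.v *)
Require Import Defs.
From Stdlib Require Import Arith List Lia Classical ClassicalEpsilon.
Import ListNotations.


Definition T (s : nat) := s * (s + 1) / 2.
Lemma T_S s : T (S s) = T s + S s.
Proof.
  unfold T. replace (S s * (S s + 1)) with (s * (s+1) + (S s) * 2) by lia.
  rewrite Nat.div_add by lia. lia.
Qed.
Lemma cpair_T a b : cpair a b = T (a + b) + b.
Proof. reflexivity. Qed.
Lemma T_mono s s' : s < s' -> T s + s < T s'.
Proof.
  induction 1. rewrite T_S. lia. rewrite T_S. lia.
Qed.
Lemma cpair_inj a b a' b' : cpair a b = cpair a' b' -> a = a' /\ b = b'.
Proof.
  rewrite !cpair_T. intros E.
  destruct (lt_eq_lt_dec (a+b) (a'+b')) as [[Hl|He]|Hl].
  - pose proof (T_mono _ _ Hl). lia.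
  - rewrite He in E. lia.
  - pose proof (T_mono _ _ Hl). lia.
Qed.
Fixpoint unpair (z : nat) : nat * nat :=
  match z with
  | 0 => (0, 0)
  | S z' => match unpair z' with
            | (0, b) => (S b, 0)
            | (S a, b) => (a, S b)
            end
  end.
Definition p1 z := fst (unpair z).
Definition p2 z := snd (unpair z).
Lemma cpair_unpair z : cpair (p1 z) (p2 z) = z.
Proof.
  unfold p1, p2. induction z as [|z IH]. reflexivity.
  simpl. destruct (unpair z) as [[|a] b]; simpl in *.
  - rewrite cpair_T in *. rewrite ?Nat.add_0_r, ?Nat.add_0_l in *. rewrite T_S. lia.
  - rewrite cpair_T in *. replace (a + S b) with (S a + b) by lia. lia.
Qed.
Lemma p1_cpair a b : p1 (cpair a b) = a.
Proof.
  pose proof (cpair_unpair (cpair a b)) as E. apply cpair_inj in E. tauto.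
Qed.
Lemma p2_cpair a b : p2 (cpair a b) = b.
Proof.
  pose proof (cpair_unpair (cpair a b)) as E. apply cpair_inj in E. tauto.
Qed.
Lemma cpair_ge_r a b : b <= cpair a b.
Proof. rewrite cpair_T. lia. Qed.

Lemma enc_list_inj l1 l2 : enc_list l1 = enc_list l2 -> l1 = l2.
Proof.
  revert l2; induction l1 as [|a l1 IH]; intros [|b l2]; simpl; try discriminate; auto.
  intros E. injection E as E. apply cpair_inj in E as [-> E]. f_equal; auto.
Qed.
Lemma enc_list_surj c : exists l, enc_list l = c.
Proof.
  induction c as [c IH] using (well_founded_induction lt_wf).
  destruct c as [|c]. exists []; reflexivity.
  destruct (IH (p2 c)) as [l Hl].
  { pose proof (cpair_ge_r (p1 c) (p2 c)). rewrite cpair_unpair in H. lia. }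
  exists (p1 c :: l). simpl. rewrite Hl, cpair_unpair. reflexivity.
Qed.
Lemma enc_list_len l : length l <= enc_list l.
Proof. induction l; simpl; auto. pose proof (cpair_ge_r a (enc_list l)). lia. Qed.


Inductive exp : Type :=
  | X | Z | Sx (a : exp) | P1x (a : exp) | P2x (a : exp) | Pr (a b : exp)
  | Cmp (a b : exp) | Rec (b s : exp) | Orc (a : exp).

Fixpoint recf (B S : nat -> nat) (e0 k : nat) : nat :=
  match k with
  | 0 => B e0
  | Datatypes.S k => S (cpair e0 (cpair k (recf B S e0 k)))
  end.

Fixpoint den (O : nat -> nat) (E : exp) (e : nat) : nat :=
  match E with
  | X => e
  | Z => 0
  | Sx a => S (den O a e)
  | P1x a => p1 (den O a e)
  | P2x a => p2 (den O a e)
  | Pr a b => cpair (den O a e) (den O b e)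
  | Cmp a b => den O a (den O b e)
  | Rec b s => recf (den O b) (den O s) (p1 e) (p2 e)
  | Orc a => O (den O a e)
  end.

Definition REARR1 := PPair (PComp PFst PFst) (PPair (PComp PSnd PFst) PSnd).
Definition REARR2 := PPair (PPair PFst (PComp PFst PSnd)) (PComp PSnd PSnd).

Fixpoint comp (orc : prog) (E : exp) : prog :=
  match E with
  | X => PSnd
  | Z => PZero
  | Sx a => PComp PSucc (comp orc a)
  | P1x a => PComp PFst (comp orc a)
  | P2x a => PComp PSnd (comp orc a)
  | Pr a b => PPair (comp orc a) (comp orc b)
  | Cmp a b => PComp (comp orc a) (PPair PFst (comp orc b))
  | Rec b s => PComp (PRec (comp orc b) (PComp (comp orc s) REARR1)) REARR2
  | Orc a => PComp orc (PPair PFst (comp orc a))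
  end.

Lemma peval_fst z : peval PFst z (p1 z).
Proof. rewrite <- (cpair_unpair z) at 1. constructor. Qed.
Lemma peval_snd z : peval PSnd z (p2 z).
Proof. rewrite <- (cpair_unpair z) at 1. constructor. Qed.

Theorem sound (orc : prog) (O : nat -> nat) (h : nat)
  (Horc : forall c, peval orc (cpair h c) (O c)) :
  forall E e, peval (comp orc E) (cpair h e) (den O E e).
Proof.
  induction E; intros e; simpl.
  - constructor.
  - constructor.
  - econstructor; [apply IHE| constructor].
  - econstructor; [apply IHE| apply peval_fst].
  - econstructor; [apply IHE| apply peval_snd].
  - constructor; auto.
  - econstructor; [|apply IHE1]. constructor; [constructor|apply IHE2].
  - rewrite <- (cpair_unpair e) at 1.
    econstructor.
    + unfold REARR2. constructor.
      * constructor; [constructor|]. econstructor; constructor.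
      * econstructor; constructor.
    + constructor. generalize (p2 e). intros k. induction k as [|k IHk]; simpl.
      * constructor. apply IHE1.
      * econstructor; [apply IHk|].
        econstructor; [|apply IHE2]. unfold REARR1.
        constructor. econstructor; constructor.
        constructor; [econstructor; constructor|constructor].
  - econstructor; [|apply Horc]. constructor; [constructor|apply IHE].
Qed.


Section Macros.
Variable O : nat -> nat.
Notation den := (den O).

Lemma den_Cmp a b e : den (Cmp a b) e = den a (den b e). Proof. reflexivity. Qed.
Lemma den_Pr a b e : den (Pr a b) e = cpair (den a e) (den b e). Proof. reflexivity. Qed.
Lemma den_P1 a e : den (P1x a) e = p1 (den a e). Proof. reflexivity. Qed.
Lemma den_P2 a e : den (P2x a) e = p2 (den a e). Proof. reflexivity. Qed.
Lemma den_X e : den X e = e. Proof. reflexivity. Qed.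
Lemma den_Z e : den Z e = 0. Proof. reflexivity. Qed.
Lemma den_Sx a e : den (Sx a) e = S (den a e). Proof. reflexivity. Qed.
Lemma den_Orc a e : den (Orc a) e = O (den a e). Proof. reflexivity. Qed.

Fixpoint Cst k := match k with 0 => Z | S k => Sx (Cst k) end.
Lemma den_Cst k e : den (Cst k) e = k. Proof. induction k; simpl; auto. Qed.

Definition IFZ c a b := Cmp (Rec a (Cmp b (P1x X))) (Pr X c).
Lemma den_IFZ c a b e :
  den (IFZ c a b) e = match den c e with 0 => den a e | S _ => den b e end.
Proof.
  unfold IFZ. simpl. rewrite p1_cpair, p2_cpair. destruct (den c e); simpl; auto.
  rewrite p1_cpair. auto.
Qed.
Opaque IFZ.

Definition Pred a := Cmp (Rec Z (P1x (P2x X))) (Pr X a).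
Lemma den_Pred a e : den (Pred a) e = pred (den a e).
Proof.
  unfold Pred. simpl. rewrite p2_cpair. destruct (den a e); simpl; auto.
  rewrite !p2_cpair, p1_cpair. auto.
Qed.
Opaque Pred.

Definition Sub a b := Cmp (Rec X (Pred (P2x (P2x X)))) (Pr a b).
Lemma den_Sub a b e : den (Sub a b) e = den a e - den b e.
Proof.
  unfold Sub. rewrite den_Cmp, den_Pr. simpl. rewrite p1_cpair, p2_cpair.
  generalize (den b e). intros k. induction k; simpl. lia.
  rewrite den_Pred. simpl. rewrite !p2_cpair. rewrite IHk. lia.
Qed.
Opaque Sub.

Fixpoint parf k := match k with 0 => 0 | S k => match parf k with 0 => 1 | _ => 0 end end.
Lemma parf_even k : parf k = if Nat.even k then 0 else 1.
Proof.
  induction k; auto. simpl parf. rewrite IHk, Nat.even_succ, <- Nat.negb_even.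
  destruct (Nat.even k); auto.
Qed.
Definition Par a := Cmp (Rec Z (IFZ (P2x (P2x X)) (Cst 1) Z)) (Pr X a).
Lemma den_Par a e : den (Par a) e = parf (den a e).
Proof.
  unfold Par. rewrite den_Cmp, den_Pr. cbn [Submission.den]. rewrite p1_cpair, p2_cpair.
  generalize (den a e). intros k.
  induction k; cbn [recf parf]; auto. rewrite den_IFZ. cbn [Submission.den]. rewrite !p2_cpair, IHk.
  destruct (parf k); auto.
Qed.
Opaque Par.

Definition flipf l := if Nat.even l then S l else pred l.
Definition Flip a := IFZ (Par a) (Sx a) (Pred a).
Lemma den_Flip a e : den (Flip a) e = flipf (den a e).
Proof.
  unfold Flip, flipf. rewrite den_IFZ, den_Par, parf_even, den_Pred.
  destruct (Nat.even (den a e)); auto.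
Qed.
Opaque Flip.

Definition Cons a l := Sx (Pr a l).
Lemma den_Cons a l e : den (Cons a l) e = S (cpair (den a e) (den l e)).
Proof. reflexivity. Qed.
Opaque Cons.

Lemma recf_iter B S e0 g : (forall k y, S (cpair e0 (cpair k y)) = g y) ->
  forall k, recf B S e0 k = Nat.iter k g (B e0).
Proof. intros H k; induction k; cbn [recf Nat.iter]; auto. rewrite H, IHk. auto. Qed.

Definition StepF f :=
  IFZ (P1x (P2x (P2x X))) (P2x (P2x X))
        (Pr (P2x (Pred (P1x (P2x (P2x X)))))
            (Cmp f (Pr (P1x X) (Pr (P1x (Pred (P1x (P2x (P2x X))))) (P2x (P2x (P2x X))))))).
Lemma den_StepF f e k y : den (StepF f) (cpair e (cpair k y)) =
  match p1 y with 0 => y | S r =>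
     cpair (p2 r) (den f (cpair e (cpair (p1 r) (p2 y)))) end.
Proof.
  unfold StepF. rewrite den_IFZ. cbn [Submission.den]. rewrite !p2_cpair.
  destruct (p1 y) eqn:E; auto. rewrite !den_Pred.
  cbn [Submission.den]. rewrite !p2_cpair, !p1_cpair, E. reflexivity.
Qed.
Opaque StepF.

Definition Fold f i L := P2x (Cmp (Rec (Pr L i) (StepF f)) (Pr X L)).

Lemma den_Fold f i L e l : den L e = enc_list l ->
  den (Fold f i L) e = fold_left (fun acc a => den f (cpair e (cpair a acc))) l (den i e).
Proof.
  intros HL. unfold Fold. rewrite den_P2, den_Cmp, den_Pr, den_X. cbn [Submission.den].
  rewrite p1_cpair, p2_cpair.
  erewrite recf_iter by (intros; apply den_StepF).
  cbn [Submission.den]. rewrite HL.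
  assert (G : forall l0 acc K, length l0 <= K ->
     Nat.iter K (fun y => match p1 y with 0 => y | S r =>
     cpair (p2 r) (den f (cpair e (cpair (p1 r) (p2 y)))) end) (cpair (enc_list l0) acc)
     = cpair 0 (fold_left (fun acc a => den f (cpair e (cpair a acc))) l0 acc)).
  { induction l0 as [|a l0 IH]; intros acc K HK.
    - cbn [enc_list fold_left]. induction K. reflexivity. rewrite Nat.iter_succ, IHK by (simpl; lia).
      rewrite p1_cpair. auto.
    - destruct K as [|K]. simpl in HK; lia.
      rewrite Nat.iter_succ_r. cbn [enc_list fold_left]. rewrite p1_cpair.
      rewrite ?p2_cpair, ?p1_cpair, ?p2_cpair. apply IH. simpl in HK; lia. }
  rewrite G. apply p2_cpair. apply enc_list_len.
Qed.
Opaque Fold.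
End Macros.


Lemma fold_left_ext {A B} (f g : A -> B -> A) l x :
  (forall a b, f a b = g a b) -> fold_left f l x = fold_left g l x.
Proof. intros H; revert x; induction l; simpl; intros; auto. rewrite H; auto. Qed.

Lemma fold_cons_map (g : nat -> nat) u v :
  fold_left (fun acc a => S (cpair (g a) acc)) u (enc_list v) = enc_list (rev (map g u) ++ v).
Proof.
  revert v; induction u as [|a u IH]; intros v; simpl; auto.
  change (S (cpair (g a) (enc_list v))) with (enc_list (g a :: v)). rewrite IH.
  rewrite <- app_assoc. reflexivity.
Qed.

Lemma fold_filter N u v :
  fold_left (fun acc a => match N - a with 0 => acc | S _ => S (cpair a acc) end) u (enc_list v)
  = enc_list (rev (filter (fun a => a <? N) u) ++ v).
Proof.
  revert v; induction u as [|a u IH]; intros v; simpl; auto.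
  destruct (N - a) eqn:E.
  - replace (a <? N) with false by (symmetry; apply Nat.ltb_ge; lia). apply IH.
  - replace (a <? N) with true by (symmetry; apply Nat.ltb_lt; lia).
    change (S (cpair a (enc_list v))) with (enc_list (a :: v)). rewrite IH.
    simpl. rewrite <- app_assoc. reflexivity.
Qed.

Fixpoint allf (F : nat -> nat) k := match k with 0 => 1 | S k =>
  match allf F k with 0 => 0 | _ => match F k with 0 => 0 | _ => 1 end end end.
Fixpoint exf (F : nat -> nat) k := match k with 0 => 0 | S k =>
  match exf F k with 0 => match F k with 0 => 0 | _ => 1 end | _ => 1 end end.

Lemma allf_spec F k : allf F k <= 1 /\ (allf F k <> 0 <-> forall j, j < k -> F j <> 0).
Proof.
  induction k; simpl. split; [lia|split; [intros; lia|intros; lia]].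
  destruct IHk as [H1 H2]. destruct (allf F k) eqn:E.
  - split; [lia|]. split; [intros H0; lia|]. intros H. apply H2. intros j Hj; apply H; lia.
  - destruct (F k) eqn:E2; (split; [lia|]); split; intros H.
    + lia.
    + specialize (H k); lia.
    + intros j Hj. destruct (Nat.eq_dec j k) as [Ejk|Hne]. subst j; lia. apply H2; auto; lia.
    + lia.
Qed.

Lemma exf_spec F k : exf F k <= 1 /\ (exf F k <> 0 <-> exists j, j < k /\ F j <> 0).
Proof.
  induction k; simpl. split; [lia|split; intros H; [lia|destruct H as [j [Hj _]]; lia]].
  destruct IHk as [H1 H2]. destruct (exf F k) eqn:E.
  - destruct (F k) eqn:E2; (split; [lia|]); split; intros H.
    + lia.
    + destruct H as [j [Hj Hf]]. assert (j < k \/ j = k) as [Hj' | ->] by lia.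
      destruct H2 as [_ H2]. exfalso; apply H2; eauto. lia.
    + exists k; split; [lia|]; lia.
    + lia.
  - split; [lia|]. split; intros H; [|lia].
    destruct H2 as [H2 _]. destruct H2 as [j [Hj Hf]]; [lia|]. exists j; split; [lia|auto].
Qed.

Ltac pc := repeat (first [rewrite p1_cpair|rewrite p2_cpair]).
Section Macros2.
Variable O : nat -> nat.
Notation den := (Submission.den O).

Definition Rev l := Fold (Cons (P1x (P2x X)) (P2x (P2x X))) Z l.
Lemma den_Rev l e u : den l e = enc_list u -> den (Rev l) e = enc_list (rev u).
Proof.
  intros H. unfold Rev. rewrite (den_Fold _ _ _ _ _ u H).
  rewrite (fold_left_ext _ (fun acc a => S (cpair (id a) acc))).
  2:{ intros. rewrite den_Cons. cbn [Submission.den]. pc. reflexivity. }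
  change (den Z e) with (enc_list []). rewrite fold_cons_map, map_id, app_nil_r. auto.
Qed.
Opaque Rev.

Definition App l1 l2 := Fold (Cons (P1x (P2x X)) (P2x (P2x X))) l2 (Rev l1).
Lemma den_App l1 l2 e u v : den l1 e = enc_list u -> den l2 e = enc_list v ->
  den (App l1 l2) e = enc_list (u ++ v).
Proof.
  intros H1 H2. unfold App. rewrite (den_Fold _ _ _ _ _ (rev u)) by (apply den_Rev; auto).
  rewrite (fold_left_ext _ (fun acc a => S (cpair (id a) acc))).
  2:{ intros. rewrite den_Cons. cbn [Submission.den]. pc. reflexivity. }
  rewrite H2, fold_cons_map, map_id, rev_involutive. auto.
Qed.
Opaque App.

Definition Inv l := Fold (Cons (Flip (P1x (P2x X))) (P2x (P2x X))) Z l.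
Lemma den_Inv l e u : den l e = enc_list u -> den (Inv l) e = enc_list (rev (map flipf u)).
Proof.
  intros H. unfold Inv. rewrite (den_Fold _ _ _ _ _ u H).
  rewrite (fold_left_ext _ (fun acc a => S (cpair (flipf a) acc))).
  2:{ intros. rewrite den_Cons, den_Flip. cbn [Submission.den]. pc. reflexivity. }
  change (den Z e) with (enc_list []). rewrite fold_cons_map, app_nil_r. auto.
Qed.
Opaque Inv.

Definition Norm N l := Rev (Fold (IFZ (Sub (Cst N) (P1x (P2x X))) (P2x (P2x X))
   (Cons (P1x (P2x X)) (P2x (P2x X)))) Z l).
Lemma den_Norm N l e u : den l e = enc_list u ->
  den (Norm N l) e = enc_list (filter (fun a => a <? N) u).
Proof.
  intros H. unfold Norm. rewrite <- (rev_involutive (filter _ u)). apply den_Rev.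
  rewrite (den_Fold _ _ _ _ _ u H).
  rewrite (fold_left_ext _ (fun acc a => match N - a with 0 => acc | S _ => S (cpair a acc) end)).
  2:{ intros. rewrite den_IFZ, den_Sub, den_Cst, den_Cons. cbn [Submission.den].
      pc. reflexivity. }
  change (den Z e) with (enc_list []). rewrite fold_filter, app_nil_r. auto.
Qed.
Opaque Norm.

Definition AllB K P := Cmp (Rec (Cst 1) (IFZ (P2x (P2x X)) Z
   (IFZ (Cmp P (Pr (P1x X) (P1x (P2x X)))) Z (Cst 1)))) (Pr X K).
Lemma den_AllB K P e : den (AllB K P) e = allf (fun j => den P (cpair e j)) (den K e).
Proof.
  unfold AllB. rewrite den_Cmp, den_Pr. cbn [Submission.den]. rewrite p1_cpair, p2_cpair.
  generalize (den K e). intros k. induction k; cbn [recf allf].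
  - apply den_Cst.
  - rewrite den_IFZ. cbn [Submission.den]. pc; rewrite IHk.
    destruct (allf _ k); auto. rewrite den_IFZ, den_Cst. cbn [Submission.den].
    pc. auto.
Qed.
Opaque AllB.

Definition ExB K P := Cmp (Rec Z (IFZ (P2x (P2x X))
   (IFZ (Cmp P (Pr (P1x X) (P1x (P2x X)))) Z (Cst 1)) (Cst 1))) (Pr X K).
Lemma den_ExB K P e : den (ExB K P) e = exf (fun j => den P (cpair e j)) (den K e).
Proof.
  unfold ExB. rewrite den_Cmp, den_Pr. cbn [Submission.den]. rewrite p1_cpair, p2_cpair.
  generalize (den K e). intros k. induction k; cbn [recf exf].
  - reflexivity.
  - rewrite den_IFZ. cbn [Submission.den]. pc; rewrite IHk.
    destruct (exf _ k); rewrite ?den_Cst; auto. rewrite den_IFZ, den_Cst. cbn [Submission.den].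
    pc. auto.
Qed.
Opaque ExB.

Definition ExL L P := Fold (IFZ (P2x (P2x X))
   (IFZ (Cmp P (Pr (P1x X) (P1x (P2x X)))) Z (Cst 1)) (Cst 1)) Z L.
Lemma den_ExL L P e l : den L e = enc_list l ->
  den (ExL L P) e <= 1 /\
  (den (ExL L P) e <> 0 <-> exists a, In a l /\ den P (cpair e a) <> 0).
Proof.
  intros H. unfold ExL. rewrite (den_Fold _ _ _ _ _ l H).
  rewrite (fold_left_ext _ (fun acc a => match acc with 0 =>
     match den P (cpair e a) with 0 => 0 | _ => 1 end | _ => 1 end)).
  2:{ intros. rewrite den_IFZ. cbn [Submission.den]. pc.
      destruct a; rewrite ?den_Cst; auto. rewrite den_IFZ, den_Cst. cbn [Submission.den].
      pc. auto. }
  change (den Z e) with 0.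
  assert (G : forall acc, acc <= 1 -> let r := fold_left (fun acc a => match acc with 0 =>
     match den P (cpair e a) with 0 => 0 | _ => 1 end | _ => 1 end) l acc in
     r <= 1 /\ (r <> 0 <-> acc <> 0 \/ exists a, In a l /\ den P (cpair e a) <> 0)).
  { clear H. induction l as [|b l IH]; intros acc Hacc; simpl.
    - split; auto. split; [auto|]. intros [H0|[a [[] _]]]; auto.
    - destruct acc as [|acc].
      + destruct (den P (cpair e b)) eqn:E.
        * destruct (IH 0 ltac:(lia)) as [IH1 IH2]. split; auto.
          rewrite IH2. split.
          -- intros [Hx|[a [Ha Hb]]]; [lia|]. right; eauto.
          -- intros [Hx|[a [[<-|Ha] Hb]]]; [lia|lia|]. right; eauto.
        * destruct (IH 1 ltac:(lia)) as [IH1 IH2]. split; auto.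
          rewrite IH2. split; intros _; [right; exists b; split; auto; lia|left; lia].
      + destruct (IH 1 ltac:(lia)) as [IH1 IH2]. split; auto.
        rewrite IH2. split; intros _; left; lia. }
  destruct (G 0 ltac:(lia)) as [G1 G2]. split; auto. rewrite G2.
  split; [intros [Hx|Hx]; [lia|auto]|auto].
Qed.
Opaque ExL.
End Macros2.


Section Grp.
Variable G : Group.
Local Notation "x ** y" := (@gmul G x y) (at level 40, left associativity).
Local Notation "1" := (@gone G).
Local Notation inv := (@ginv G).

Lemma assocR (x y z : G) : (x ** y) ** z = x ** (y ** z).
Proof. symmetry; apply gmulA. Qed.
Lemma mulVr (x : G) : inv x ** x = 1. Proof. apply gmulV. Qed.
Lemma mul1r (x : G) : 1 ** x = x. Proof. apply gmul1. Qed.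
Lemma mulrV (x : G) : x ** inv x = 1.
Proof.
  rewrite <- (mul1r (x ** inv x)). rewrite <- (mulVr (inv x)) at 1.
  rewrite assocR, <- (assocR (inv x) x), mulVr, mul1r, mulVr. reflexivity.
Qed.
Lemma mulr1 (x : G) : x ** 1 = x.
Proof. rewrite <- (mulVr x), gmulA, mulrV, mul1r. reflexivity. Qed.
Lemma mulKV (x y : G) : inv x ** (x ** y) = y.
Proof. rewrite gmulA, mulVr, mul1r. reflexivity. Qed.
Lemma mulVK (x y : G) : x ** (inv x ** y) = y.
Proof. rewrite gmulA, mulrV, mul1r. reflexivity. Qed.
Lemma inv_uniq (x y : G) : x ** y = 1 -> inv x = y.
Proof. intros E. rewrite <- (mulr1 (inv x)), <- E, mulKV. reflexivity. Qed.
Lemma invK (x : G) : inv (inv x) = x.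
Proof. apply inv_uniq. apply mulVr. Qed.
Lemma invM (x y : G) : inv (x ** y) = inv y ** inv x.
Proof. apply inv_uniq. rewrite assocR, (gmulA _ y), mulrV, mul1r, mulrV. reflexivity. Qed.
Lemma inv1 : inv 1 = 1.
Proof. apply inv_uniq. apply mul1r. Qed.
End Grp.

Ltac gnorm := repeat progress rewrite ?assocR, ?invM, ?invK, ?inv1, ?mulVr, ?mulrV,
   ?mul1r, ?mulr1, ?mulKV, ?mulVK.

Lemma div2_e m : (2*m)/2 = m. Proof. symmetry; apply (Nat.div_unique _ _ _ 0); lia. Qed.
Lemma div2_o m : (2*m+1)/2 = m. Proof. symmetry; apply (Nat.div_unique _ _ _ 1); lia. Qed.
Section Words.
Variable G : Group.
Variable gens : nat -> G.
Local Notation "x ** y" := (@gmul G x y) (at level 40, left associativity).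
Local Notation inv := (@ginv G).
Local Notation ev := (eval_word gens).

Lemma ev_app u v : ev (u ++ v) = ev u ** ev v.
Proof. induction u; simpl. rewrite mul1r; auto. unfold eval_word in *. simpl. rewrite IHu. gnorm. auto. Qed.

Lemma letter_flip a : eval_letter gens (flipf a) = inv (eval_letter gens a).
Proof.
  unfold flipf, eval_letter. destruct (Nat.even a) eqn:E.
  - apply Nat.even_spec in E as [m ->]. replace (S (2*m)) with (2*m+1) by lia.
    rewrite div2_o, div2_e.
    replace (Nat.even (2*m+1)) with false. auto.
    symmetry. rewrite <- Nat.negb_odd. rewrite Nat.odd_odd. auto.
  - assert (Nat.odd a = true) by (rewrite <- Nat.negb_even, E; auto).
    apply Nat.odd_spec in H as [m ->]. replace (pred (2*m+1)) with (2*m) by lia.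
    rewrite div2_o, div2_e. rewrite Nat.even_mul. simpl. rewrite invK. auto.
Qed.

Lemma ev_inv u : ev (rev (map flipf u)) = inv (ev u).
Proof.
  induction u; simpl. rewrite inv1; auto.
  rewrite ev_app, IHu. unfold eval_word at 2 3. simpl. rewrite letter_flip. gnorm. auto.
Qed.

Variable n : nat.
Definition nrm (u : list nat) := filter (fun a => a <? 2*n) u.

Lemma nrm_app u v : nrm (u ++ v) = nrm u ++ nrm v.
Proof. apply filter_app. Qed.
Lemma flip_lt a : (flipf a <? 2*n) = (a <? 2*n).
Proof.
  unfold flipf. destruct (Nat.even a) eqn:E.
  - apply Nat.even_spec in E as [m ->]. destruct (2*m <? 2*n) eqn:E1.
    apply Nat.ltb_lt in E1. apply Nat.ltb_lt. lia.
    apply Nat.ltb_ge in E1. apply Nat.ltb_ge. lia.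
  - assert (Nat.odd a = true) by (rewrite <- Nat.negb_even, E; auto).
    apply Nat.odd_spec in H as [m ->]. destruct (2*m+1 <? 2*n) eqn:E1.
    apply Nat.ltb_lt in E1. apply Nat.ltb_lt. lia.
    apply Nat.ltb_ge in E1. apply Nat.ltb_ge. lia.
Qed.
Lemma nrm_inv u : nrm (rev (map flipf u)) = rev (map flipf (nrm u)).
Proof.
  induction u; cbn [map rev]; auto. rewrite nrm_app, IHu. unfold nrm at 2 3. cbn [filter].
  rewrite flip_lt. destruct (a <? 2*n); cbn [map rev]; rewrite ?app_nil_r; auto.
Qed.
Lemma nrm_ok w : word_ok n w -> nrm w = w.
Proof.
  intros H. unfold nrm. induction H; cbn [filter]; auto.
  destruct (Nat.ltb_spec x (2*n)). f_equal; auto.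
  exfalso. pose proof (Nat.div_le_mono _ _ 2 ltac:(lia) H1). rewrite div2_e in H2. lia.
Qed.
Lemma nrm_word_ok u : word_ok n (nrm u).
Proof.
  unfold word_ok, nrm. apply Forall_forall. intros x Hx. apply filter_In in Hx as [_ Hx].
  apply Nat.ltb_lt in Hx. apply Nat.div_lt_upper_bound; lia.
Qed.
Lemma nrm_letter a : a < 2*n -> nrm [a] = [a].
Proof. intros H. unfold nrm. cbn [filter]. destruct (Nat.ltb_spec a (2*n)); auto; lia.
Qed.
End Words.


Definition dec (c : nat) : list nat :=
  proj1_sig (constructive_indefinite_description _ (enc_list_surj c)).
Lemma enc_dec c : enc_list (dec c) = c.
Proof. unfold dec. destruct (constructive_indefinite_description _ _); auto. Qed.
Lemma dec_enc l : dec (enc_list l) = l.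
Proof. apply enc_list_inj. apply enc_dec. Qed.

Lemma div2_lt a n : a / 2 < n -> a < 2 * n.
Proof. intros H. pose proof (Nat.div_mod a 2). pose proof (Nat.mod_upper_bound a 2). lia. Qed.

Section Main.
Variable G : Group.
Variable n : nat.
Variable gens : nat -> G.
Hypothesis Hgen : generates n gens.
Variable Hs : list G.
Local Notation "x ** y" := (@gmul G x y) (at level 40, left associativity).
Local Notation "1" := (@gone G).
Local Notation inv := (@ginv G).
Local Notation ev := (eval_word gens).
Local Notation H := (in_gen Hs).

Definition el c := ev (nrm n (dec c)).
Definition Bm M y := exists c, c <= M /\ y = el c.
Definition NM M y := forall u, Bm M u -> H (u ** y ** inv u).
Definition Dprop M := forall v a, Bm M v -> a < 2 * n ->
  exists z, Bm M z /\ NM M (v ** eval_letter gens a ** inv z).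

Lemma H_eq x y : H x -> x = y -> H y.
Proof. intros ? <-; auto. Qed.
Ltac geq := gnorm; reflexivity.

Lemma Bm_1 M : Bm M 1.
Proof. exists 0. split; [lia|]. unfold el. change 0 with (enc_list []). rewrite dec_enc. reflexivity. Qed.
Lemma Bm_mono M M' y : M <= M' -> Bm M y -> Bm M' y.
Proof. intros HM [c [Hc ->]]. exists c; split; auto; lia. Qed.

Lemma NM_mul M x y : NM M x -> NM M y -> NM M (x ** y).
Proof.
  intros Hx Hy u Hu. eapply H_eq. apply ig_mul; [apply (Hx u Hu)|apply (Hy u Hu)]. geq.
Qed.

Lemma cover M : Dprop M -> forall x, exists z, Bm M z /\ NM M (x ** inv z).
Proof.
  intros HD x. destruct (Hgen x) as [w [Hw <-]]. induction w as [|a w IH] using rev_ind.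
  - exists 1. split. apply Bm_1. intros u _. unfold eval_word; simpl. eapply H_eq. apply ig_one. geq.
  - unfold word_ok in Hw. apply Forall_app in Hw as [Hw Ha]. inversion Ha; subst.
    destruct (IH Hw) as [z [Hz Nz]].
    destruct (HD z a Hz (div2_lt _ _ H1)) as [z' [Hz' Nz']].
    exists z'. split; auto. rewrite ev_app.
    assert (E : ev w ** ev [a] ** inv z' = (ev w ** inv z) ** (z ** eval_letter gens a ** inv z')).
    { unfold eval_word at 2. simpl. geq. }
    rewrite E. apply NM_mul; auto.
Qed.

Lemma core M : Dprop M -> forall m, NM M m -> forall y, H (y ** m ** inv y).
Proof.
  intros HD m Hm y. destruct (cover M HD y) as [z [Hz Nz]].
  assert (H1 : H (y ** inv z)). { eapply H_eq. apply (Nz 1 (Bm_1 M)). geq. }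
  eapply H_eq. apply ig_mul; [apply ig_mul; [exact H1|apply (Hm z Hz)]|apply ig_inv; exact H1].
  geq.
Qed.

Lemma answer M : Dprop M -> forall g b,
  (exists x, H (inv x ** g ** x ** inv b)) <-> (exists z, Bm M z /\ H (inv z ** g ** z ** inv b)).
Proof.
  intros HD g b. split.
  - intros [x Hx]. destruct (cover M HD x) as [z [Hz Nz]]. exists z. split; auto.
    pose proof (core M HD _ Nz) as C.
    assert (Ci : forall y, H (y ** inv (x ** inv z) ** inv y)).
    { intros y. eapply H_eq. apply ig_inv. apply (C y). geq. }
    eapply H_eq. apply ig_mul; [apply ig_mul; [apply (Ci (inv z ** g))|apply (C (inv z))]|exact Hx].
    geq.
  - intros [z [_ Hz]]. eauto.
Qed.

Lemma forall2_pair {A} (R1 R2 : A -> A -> Prop) l s : Forall2 R1 l s -> Forall2 R2 l s ->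
  forall t, In t l -> exists t', R1 t t' /\ R2 t t'.
Proof.
  induction 1; intros H2 t Ht. destruct Ht.
  inversion H2; subst. destruct Ht as [<-|Ht]; eauto.
Qed.

Hypothesis Hfi : fin_index Hs.

Lemma exists_D : exists M, Dprop M.
Proof.
  destruct Hfi as [ts Hts].
  set (sigOK := fun x s => Forall2 (fun t t' => In t' ts /\ H (t ** x ** inv t')) ts s).
  assert (Sex : forall x l, exists s, Forall2 (fun t t' => In t' ts /\ H (t ** x ** inv t')) l s).
  { intros x l. induction l as [|t l [s Hs']]. exists []; constructor.
    destruct (Hts (t ** x)) as [t' [Ht' Hh]]. exists (t' :: s). constructor; auto. }
  set (allL := fix allL k := match k with 0 => [@nil G] | S k =>
          flat_map (fun t => map (cons t) (allL k)) ts end).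
  assert (Sin : forall x l s, Forall2 (fun t t' => In t' ts /\ H (t ** x ** inv t')) l s ->
            In s (allL (length l))).
  { intros x l s F. induction F as [|t0 t1 l0 s0 HR F IHF]; simpl. auto. apply in_flat_map. exists t1. split. apply HR.
    apply in_map. auto. }
  assert (Fin : forall L : list (list G), exists M, forall s, In s L -> (exists x, sigOK x s) ->
            exists z, Bm M z /\ sigOK z s).
  { induction L as [|s L [M0 IH]]. exists 0. intros s []. 
    destruct (classic (exists x, sigOK x s)) as [[x Hx]|Hn].
    - destruct (Hgen x) as [w [Hw Ex]]. exists (max M0 (enc_list w)).
      intros s' [<-|Hs'] Hex.
      + exists x. split; auto. exists (enc_list w). split; [lia|]. unfold el.
        rewrite dec_enc, nrm_ok; auto.
      + destruct (IH s' Hs' Hex) as [z [Hz Hz']]. exists z; split; auto.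
        eapply Bm_mono; [|eauto]. lia.
    - exists M0. intros s' [<-|Hs'] Hex. contradiction. auto. }
  destruct (Fin (allL (length ts))) as [M HM]. exists M.
  intros v a Hv Ha. destruct (Sex (v ** eval_letter gens a) ts) as [s Hs'].
  destruct (HM s (Sin _ _ _ Hs') (ex_intro _ _ Hs')) as [z [Hz Hzs]].
  exists z. split; auto. intros u Hu.
  destruct (Hts u) as [t [Ht Hut]].
  destruct (forall2_pair _ _ _ _ Hs' Hzs t Ht) as [t' [[_ H1] [_ H2]]].
  eapply H_eq. apply ig_mul; [apply ig_mul; [apply ig_mul; [exact Hut|exact H1]|apply ig_inv; exact H2]|apply ig_inv; exact Hut].
  geq.
Qed.
End Main.


Ltac pcs := repeat (first [rewrite p1_cpair in *|rewrite p2_cpair in *]).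

Definition WD : exp :=
  App (P2x X) (App (P2x (P1x (P1x (P1x X))))
    (Cons (P2x (P1x (P1x X))) (App (Inv (P2x (P1x X))) (Inv (P2x X))))).
Definition B3 := AllB (Sx (P2x (P1x (P1x (P1x X))))) (Orc WD).
Definition B2 := ExB (Sx (P2x (P1x (P1x X)))) B3.
Definition B1 n := AllB (Cst (2 * n)) B2.
Definition Dexp n := AllB (Sx (P2x X)) (B1 n).
Definition Fexp n := IFZ (Dexp n) (Cst 1) Z.

Definition WA : exp :=
  App (Inv (P2x (P1x X))) (App (P1x (P1x (P1x (P1x X)))) (App (P2x (P1x X)) (Inv (P2x X)))).
Definition ANS := ExB (Sx (P2x X)) (ExL (P2x (P1x (P1x X))) (Orc WA)).

Section Conn.
Variable G : Group.
Variable n : nat.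
Variable gens : nat -> G.
Variable Hs : list G.
Variable O : nat -> nat.
Hypothesis HO1 : forall c, O c <= 1.
Hypothesis HO : forall c, O c <> 0 <-> in_gen Hs (el G n gens c).
Local Notation "x ** y" := (@gmul G x y) (at level 40, left associativity).
Local Notation inv := (@ginv G).
Local Notation ev := (eval_word gens).
Local Notation H := (in_gen Hs).

Lemma el_code l : el G n gens (enc_list l) = ev (nrm n l).
Proof. unfold el. rewrite dec_enc. auto. Qed.

Lemma denX_dec e : den O (P2x X) e = enc_list (dec (p2 e)).
Proof. cbn [den]. rewrite enc_dec. auto. Qed.

Lemma WD_spec e c a c' c'' : a < 2 * n ->
  den O (Orc WD) (cpair (cpair (cpair (cpair e c) a) c') c'') <> 0 <->
  H (el G n gens c'' ** (el G n gens c ** eval_letter gens a ** inv (el G n gens c'))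
       ** inv (el G n gens c'')).
Proof.
  intros Ha. rewrite den_Orc. unfold WD.
  set (e4 := cpair (cpair (cpair (cpair e c) a) c') c'').
  assert (E1 : den O (Inv (P2x X)) e4 = enc_list (rev (map flipf (dec c'')))).
  { apply den_Inv. cbn [den]. unfold e4. pcs. symmetry; apply enc_dec. }
  assert (E2 : den O (Inv (P2x (P1x X))) e4 = enc_list (rev (map flipf (dec c')))).
  { apply den_Inv. cbn [den]. unfold e4. pcs. symmetry; apply enc_dec. }
  assert (E3 : den O (App (Inv (P2x (P1x X))) (Inv (P2x X))) e4 =
     enc_list (rev (map flipf (dec c')) ++ rev (map flipf (dec c'')))).
  { apply den_App; auto. }
  assert (E4 : den O (Cons (P2x (P1x (P1x X))) (App (Inv (P2x (P1x X))) (Inv (P2x X)))) e4 =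
     enc_list (a :: rev (map flipf (dec c')) ++ rev (map flipf (dec c'')))).
  { rewrite den_Cons, E3. cbn [den]. unfold e4. pcs. reflexivity. }
  assert (E5 : den O (App (P2x (P1x (P1x (P1x X))))
    (Cons (P2x (P1x (P1x X))) (App (Inv (P2x (P1x X))) (Inv (P2x X))))) e4 =
     enc_list (dec c ++ a :: rev (map flipf (dec c')) ++ rev (map flipf (dec c'')))).
  { apply den_App; auto. cbn [den]. unfold e4. pcs. symmetry; apply enc_dec. }
  erewrite den_App; [| |exact E5].
  2:{ cbn [den]. unfold e4. pcs. symmetry; apply enc_dec. }
  rewrite HO, el_code.
  rewrite !nrm_app. change (a :: ?l) with ([a] ++ l). rewrite !nrm_app, !nrm_inv, nrm_letter by auto.
  rewrite !ev_app, !ev_inv. unfold el.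
  split; intros Hx; (eapply H_eq; [exact Hx|]); unfold eval_word at 2; simpl; gnorm; reflexivity.
Qed.

Lemma D_spec E0 M : den O (Dexp n) (cpair E0 M) <> 0 <-> Dprop G n gens Hs M.
Proof.
  unfold Dexp. rewrite den_AllB. cbn [den]. pcs.
  rewrite (proj2 (allf_spec _ _)).
  unfold Dprop, Bm, NM. split.
  - intros HA v a [c [Hc ->]] Ha.
    specialize (HA c ltac:(lia)). unfold B1 in HA. rewrite den_AllB, den_Cst in HA.
    rewrite (proj2 (allf_spec _ _)) in HA. specialize (HA a Ha). unfold B2 in HA.
    rewrite den_ExB in HA. cbn [den] in HA. pcs.
    rewrite (proj2 (exf_spec _ _)) in HA. destruct HA as [c' [Hc' HA]].
    exists (el G n gens c'). split. exists c'; split; [lia|auto].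
    intros u [c'' [Hc'' ->]]. unfold B3 in HA. rewrite den_AllB in HA. cbn [den] in HA. pcs.
    rewrite (proj2 (allf_spec _ _)) in HA. specialize (HA c'' ltac:(lia)).
    apply WD_spec in HA; auto.
  - intros HD c Hc. unfold B1. rewrite den_AllB, den_Cst. rewrite (proj2 (allf_spec _ _)).
    intros a Ha. unfold B2. rewrite den_ExB. cbn [den]. pcs. rewrite (proj2 (exf_spec _ _)).
    assert (Hc2 : c <= M) by lia. destruct (HD (el G n gens c) a (ex_intro _ c (conj Hc2 eq_refl)) Ha) as [z [[c' [Hc' ->]] Hz]].
    exists c'. split; [lia|]. unfold B3. rewrite den_AllB. cbn [den]. pcs.
    rewrite (proj2 (allf_spec _ _)). intros c'' Hc''. apply WD_spec; auto.
    apply Hz. exists c''; split; [lia|auto].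
Qed.

Lemma ANS_spec w bs M : word_ok n w -> Forall (word_ok n) bs ->
  den O ANS (cpair (cpair (enc_list w) (enc_words bs)) M) <= 1 /\
  (den O ANS (cpair (cpair (enc_list w) (enc_words bs)) M) <> 0 <->
   exists c b, c <= M /\ In b bs /\
     H (inv (el G n gens c) ** ev w ** el G n gens c ** inv (ev b))).
Proof.
  intros Hw Hbs. unfold ANS. rewrite den_ExB. cbn [den]. pcs.
  set (F := fun j => _). destruct (exf_spec F (S M)) as [S1 S2]. split; auto.
  rewrite S2. unfold F.
  assert (K : forall c, (den O (ExL (P2x (P1x (P1x X))) (Orc WA))
     (cpair (cpair (cpair (enc_list w) (enc_words bs)) M) c) <> 0 <->
     exists b, In b bs /\ H (inv (el G n gens c) ** ev w ** el G n gens c ** inv (ev b)))).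
  { intros c.
    assert (Lb : den O (P2x (P1x (P1x X))) (cpair (cpair (cpair (enc_list w) (enc_words bs)) M) c)
       = enc_list (map enc_list bs)) by (cbn [den]; pcs; reflexivity).
    rewrite (proj2 (den_ExL _ _ _ _ _ Lb)).
    split.
    - intros [bc [Hbc HA]]. apply in_map_iff in Hbc as [b [<- Hb]]. exists b. split; auto.
      rewrite Forall_forall in Hbs. specialize (Hbs b Hb).
      rewrite den_Orc, HO in HA. unfold WA in HA.
      erewrite den_App in HA; [| apply den_Inv; cbn [den]; pcs; symmetry; apply enc_dec
        | apply den_App; [cbn [den]; pcs; reflexivity|
          apply den_App; [cbn [den]; pcs; symmetry; apply enc_dec| apply den_Inv; cbn [den]; pcs; reflexivity]]].
      rewrite el_code, !nrm_app, !nrm_inv, (nrm_ok n w), (nrm_ok n b), !ev_app, !ev_inv in HA by auto.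
      unfold el. eapply H_eq; [exact HA|]. gnorm. reflexivity.
    - intros [b [Hb HB]]. exists (enc_list b). split. apply in_map; auto.
      rewrite Forall_forall in Hbs. specialize (Hbs b Hb).
      rewrite den_Orc, HO. unfold WA.
      erewrite den_App; [| apply den_Inv; cbn [den]; pcs; symmetry; apply enc_dec
        | apply den_App; [cbn [den]; pcs; reflexivity|
          apply den_App; [cbn [den]; pcs; symmetry; apply enc_dec| apply den_Inv; cbn [den]; pcs; reflexivity]]].
      rewrite el_code, !nrm_app, !nrm_inv, (nrm_ok n w), (nrm_ok n b), !ev_app, !ev_inv by auto.
      unfold el in HB. eapply H_eq; [exact HB|]. gnorm. reflexivity. }
  split.
  - intros [c [Hc HA]]. apply K in HA as [b [Hb HB]]. exists c, b. repeat split; auto; lia.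
  - intros [c [b [Hc [Hb HB]]]]. exists c. split; [lia|]. apply K. eauto.
Qed.
End Conn.


Lemma min_ex (P : nat -> Prop) : (exists k, P k) -> exists k, P k /\ forall m, m < k -> ~ P m.
Proof.
  intros [k Hk]. induction k as [k IH] using (well_founded_induction lt_wf).
  destruct (classic (exists m, m < k /\ P m)) as [[m [Hm Pm]]|Hn].
  - apply (IH m Hm Pm).
  - exists k. split; auto. intros m Hm Pm. apply Hn; eauto.
Qed.

Theorem proposition3p7 (G : Group) (n : nat) (gens : nat -> G)
  (Hgen : generates n gens) :
  MPfi_decidable n gens -> GCPRec_decidable n gens.
Proof.
  intros [p Hp].
  set (NORMP := comp PZero (Norm (2*n) X)).
  set (orc := PComp p (PPair NORMP PFst)).
  set (MINP := PMin (PComp (comp orc (Fexp n)) REARR1)).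
  exists (PComp (PComp (comp orc ANS) (PPair PFst (PPair PSnd MINP)))
            (PPair (PComp PFst PSnd) (PPair PFst (PComp PSnd PSnd)))).
  intros w hs bs Hw Hhs Hbs Hfi.
  set (Hs := map (eval_word gens) hs). set (h := enc_words hs).
  set (O := fun c => if excluded_middle_informative (in_gen Hs (el G n gens c)) then 1 else 0).
  assert (HO1 : forall c, O c <= 1).
  { intros c; unfold O; destruct (excluded_middle_informative _); lia. }
  assert (HO : forall c, O c <> 0 <-> in_gen Hs (el G n gens c)).
  { intros c; unfold O; destruct (excluded_middle_informative _); split; intros; auto; lia. }
  assert (Horc : forall c, peval orc (cpair h c) (O c)).
  { intros c. unfold orc. econstructor; [|].
    - constructor; [|constructor].
      pose proof (sound PZero (fun _ => 0) h (fun c => ev_zero _) (Norm (2*n) X) c) as S.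
      rewrite (den_Norm _ _ _ _ (dec c)) in S by (cbn [den]; symmetry; apply enc_dec).
      exact S.
    - destruct (Hp (nrm n (dec c)) hs (nrm_word_ok n _) Hhs Hfi) as [D1 D0].
      unfold O. destruct (excluded_middle_informative _) as [Y|N].
      + apply D1. exact Y.
      + apply D0. exact N. }
  pose proof (sound orc O h Horc) as SD.
  destruct (min_ex _ (exists_D G n gens Hgen Hs Hfi)) as [M [HM Hmin]].
  set (E0 := cpair (enc_list w) (enc_words bs)).
  assert (HF : forall m, peval (PComp (comp orc (Fexp n)) REARR1) (cpair (cpair h E0) m)
                  (den O (Fexp n) (cpair E0 m))).
  { intros m. econstructor; [|apply SD]. unfold REARR1.
    constructor. econstructor; constructor.
    constructor; [econstructor; constructor|constructor]. }
  assert (HFv : forall m, den O (Fexp n) (cpair E0 m) =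
             match den O (Dexp n) (cpair E0 m) with 0 => 1 | S _ => 0 end).
  { intros m. unfold Fexp. rewrite den_IFZ, den_Cst. reflexivity. }
  assert (HMIN : peval MINP (cpair h E0) M).
  { unfold MINP. constructor.
    - specialize (HF M). rewrite HFv in HF.
      pose proof (proj2 (D_spec G n gens Hs O HO E0 M) HM).
      destruct (den O (Dexp n) (cpair E0 M)); [lia|exact HF].
    - intros m Hm. specialize (HF m). rewrite HFv in HF.
      destruct (den O (Dexp n) (cpair E0 m)) eqn:E.
      + exists 0. exact HF.
      + exfalso. apply (Hmin m Hm). apply (D_spec G n gens Hs O HO E0 m). lia. }
  assert (HQ : peval (PComp (PComp (comp orc ANS) (PPair PFst (PPair PSnd MINP)))
            (PPair (PComp PFst PSnd) (PPair PFst (PComp PSnd PSnd))))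
            (cpair (enc_list w) (cpair (enc_words hs) (enc_words bs)))
            (den O ANS (cpair E0 M))).
  { econstructor.
    - constructor; [econstructor; constructor|]. constructor; [constructor|econstructor; constructor].
    - econstructor; [|apply SD]. constructor; [constructor|]. constructor; [constructor|exact HMIN]. }
  destruct (ANS_spec G n gens Hs O HO w bs M Hw Hbs) as [A1 A2].
  fold E0 in A1, A2.
  assert (Equiv : (exists x : G, exists b, In b bs /\
         in_gen (map (eval_word gens) hs)
           (gmul (gmul (gmul (ginv x) (eval_word gens w)) x) (ginv (eval_word gens b))))
     <-> den O ANS (cpair E0 M) <> 0).
  { rewrite A2. split.
    - intros [x [b [Hb Hx]]].
      destruct (proj1 (answer G n gens Hgen Hs M HM (eval_word gens w) (eval_word gens b))
         (ex_intro _ x Hx)) as [z [[c [Hc ->]] Hz]].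
      exists c, b. auto.
    - intros [c [b [Hc [Hb Hz]]]]. exists (el G n gens c), b. auto. }
  split.
  - intros Q. replace 1 with (den O ANS (cpair E0 M)); auto.
    apply Equiv in Q. lia.
  - intros NQ. replace 0 with (den O ANS (cpair E0 M)); auto.
    destruct (den O ANS (cpair E0 M)) eqn:E; auto. exfalso. apply NQ, Equiv. lia.
Qed.
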